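(* Fix $q\in[0,1)$ and $N\in\mathbb N$. Let $\boldsymbol\zeta=(\zeta_t)_{t\ge0}$ be the multi-species ASEP on $\mathbb Z$ with $\zeta_0$ the identity; $\boldsymbol\xi=(\xi_t)_{t\ge0}$ the biased card shuffling of size $N$ with $\xi_0$ the identity of $[N]$; $\boldsymbol\lambda=(\lambda_t)_{t\ge0}$ the biased card shuffling of size $N$ started from an arbitrary deterministic $\lambda_0\in S_N$; and $\overline{\boldsymbol\xi}=(\overline\xi_t)_{t\ge0}$ the stationary biased card shuffling of size $N$ ($\overline\xi_0\sim\mathcal M_N$, independent of the Poisson processes), all four coupled under the basic coupling. For $k\in\llbracket0,N\rrbracket$ and $t\ge0$ set $\xi^k_t(x)=\mathbb 1[\xi_t(x)\le k]$, $\lambda^k_t(x)=\mathbb 1[\lambda_t(x)\le k]$, $\overline\xi^k_t(x)=\mathbb 1[\overline\xi_t(x)\le k]$ for $x\in[N]$, and $\zeta^k_t(x)=\mathbb 1[\zeta_t(x)\le k]$ for $x\in\mathbb Z$. Then almost surely, for every $k\in\llbracket0,N\rrbracket$ and $t\ge0$, \[ h\{\xi^k_t\}\le h\{\lambda^k_t\},\qquad h\{\xi^k_t\}\le h\{\zeta^k_t\},\qquad h\{\xi^k_t\}\le h\{\overline\xi^k_t\}, \] where $f\le g$ means $f(x)\le g(x)$ for all $x\in\mathbb Z$.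
   Context: $\llbracket x,y\rrbracket$ is the set of integers in $[x,y]$, $[N]=\llbracket1,N\rrbracket$, $S_N$ the bijections of $[N]$. Mallows measure: $\mathcal M_N(w)\propto q^{\#\{i<j:\,w(i)<w(j)\}}$. Multi-species dynamics on a domain $D$ ($D=\mathbb Z$ or a finite integer interval), state a bijection $\sigma:D\to D$: each nearest-neighbour pair $x,x+1\in D$ swaps its values at rate $1$ if $\sigma(x)<\sigma(x+1)$ and at rate $q$ otherwise; on $D=[N]$ this is the biased card shuffling, on $D=\mathbb Z$ the multi-species ASEP. Basic coupling: take independent Poisson point processes $\Pi_1,\Pi_q$ on $\mathbb Z\times[0,\infty)$ with intensities $1$ and $q$ (times Lebesgue $\times$ counting); at each $(x,s)\in\Pi_1$ with $x,x+1\in D$, swap the values at $x,x+1$ if just before time $s$ the value at $x$ is smaller than at $x+1$; at each $(x,s)\in\Pi_q$ with $x,x+1\in D$, swap if the value at $x$ is larger. All processes are driven by the same $\Pi_1,\Pi_q$. Height function: for $\omega:\mathbb Z\to\{0,1\}$ eventually constant as $x\to-\infty$, $h\{\omega\}:\mathbb Z\to\mathbb Z$ is defined by $h\{\omega\}(x)-h\{\omega\}(x-1)=1-2\omega(x)$, with $h\{\omega\}(x)=x$ for all small $x$ if $\omega=0$ near $-\infty$, and $h\{\omega\}(x)=-x$ for all small $x$ if $\omega=1$ near $-\infty$. For $\omega:\llbracket m,n\rrbracket\to\{0,1\}$, $h\{\omega\}$ is defined by extending $\omega$ by $0$ on $x<m$ and by $1$ on $x>n$. *)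

(* Defs.v *)
From Stdlib Require Import ZArith Reals List ClassicalEpsilon.
Open Scope Z_scope.

(** * Clock data (a realization of the Poisson point processes Pi_1, Pi_q).
    [P x s] means that [P] has a point at [(x,s)], i.e. the edge {x,x+1}
    rings at time [s]. *)
Definition clock := Z -> R -> Prop.

Definition rings (P1 Pq : clock) (x : Z) (s : R) : Prop := P1 x s \/ Pq x s.

(** Properties of the realization which hold almost surely for two independent
    Poisson point processes on Z x [0,oo) with intensities 1 and q:
    positive times, local finiteness, all points at distinct times, and
    (Harris) arbitrarily far to the left and to the right there are edges
    without any ring up to any given time T. *)
Definition good_clocks (P1 Pq : clock) : Prop :=
  (forall x s, rings P1 Pq x s -> (0 < s)%R) /\
  (forall x (T : R), exists l : list R,
      forall s, (s <= T)%R -> rings P1 Pq x s -> In s l) /\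
  (forall x y s, rings P1 Pq x s -> rings P1 Pq y s -> x = y) /\
  (forall x s, ~ (P1 x s /\ Pq x s)) /\
  (forall (T : R) n, exists x, n <= x /\
      forall s, (s <= T)%R -> ~ rings P1 Pq x s) /\
  (forall (T : R) n, exists x, x <= n /\
      forall s, (s <= T)%R -> ~ rings P1 Pq x s).

(** Domains: [1,N] (card shuffling) and Z (multi-species ASEP). *)
Definition dom_N (N : nat) : Z -> Prop := fun x => 1 <= x <= Z.of_nat N.
Definition dom_Z : Z -> Prop := fun _ => True.

Definition site_quiet (P1 Pq : clock) (D : Z -> Prop) (x : Z) (I : R -> Prop) : Prop :=
  forall y s, I s -> (y = x - 1 \/ y = x) -> D y -> D (y + 1) -> ~ rings P1 Pq y s.

(** [sigma] is the multi-species dynamics on [D] driven by the clocks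
    (basic coupling), started from [sigma0]: values only change at rings of
    adjacent edges; at a point of [P1] on edge {y,y+1} the values are swapped
    iff (just before) the value at y is smaller than at y+1; at a point of
    [Pq] iff it is larger.  "Just before time s" is expressed through any
    earlier time u such that nothing rings near y, y+1 during (u,s). *)
Definition trajectory (P1 Pq : clock) (D : Z -> Prop) (sigma0 : Z -> Z)
    (sigma : R -> Z -> Z) : Prop :=
  (forall x, D x -> sigma 0%R x = sigma0 x) /\
  (forall x (s t : R), D x -> (0 <= s)%R -> (s <= t)%R ->
      site_quiet P1 Pq D x (fun r => s < r <= t)%R -> sigma t x = sigma s x) /\
  (forall y (s u : R), P1 y s -> D y -> D (y + 1) -> (0 <= u < s)%R ->
      site_quiet P1 Pq D y (fun r => u < r < s)%R ->
      site_quiet P1 Pq D (y + 1) (fun r => u < r < s)%R ->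
      if sigma u y <? sigma u (y + 1)
      then sigma s y = sigma u (y + 1) /\ sigma s (y + 1) = sigma u y
      else sigma s y = sigma u y /\ sigma s (y + 1) = sigma u (y + 1)) /\
  (forall y (s u : R), Pq y s -> D y -> D (y + 1) -> (0 <= u < s)%R ->
      site_quiet P1 Pq D y (fun r => u < r < s)%R ->
      site_quiet P1 Pq D (y + 1) (fun r => u < r < s)%R ->
      if sigma u (y + 1) <? sigma u y
      then sigma s y = sigma u (y + 1) /\ sigma s (y + 1) = sigma u y
      else sigma s y = sigma u y /\ sigma s (y + 1) = sigma u (y + 1)).

(** Elements of S_N (bijections of [N]), as functions Z -> Z restricted to [1,N]. *)
Definition is_perm_N (N : nat) (s : Z -> Z) : Prop :=
  (forall x, dom_N N x -> dom_N N (s x)) /\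
  (forall x y, dom_N N x -> dom_N N y -> s x = s y -> x = y).

Definition occ (k : Z) (sigma : Z -> Z) : Z -> Z :=
  fun x => if sigma x <=? k then 1 else 0.

Definition ext (N : nat) (w : Z -> Z) : Z -> Z :=
  fun x => if x <? 1 then 0 else if Z.of_nat N <? x then 1 else w x.

(** sum_{m < y <= x} f y (0 if x <= m). *)
Definition zsum (f : Z -> Z) (m x : Z) : Z :=
  fold_right Z.add 0
    (map (fun i => f (m + 1 + Z.of_nat i)) (seq 0 (Z.to_nat (x - m)))).

(** Height function computed from a point m at and below which w is constant. *)
Definition height_from (w : Z -> Z) (m : Z) (x : Z) : Z :=
  if w m =? 0 then x - 2 * zsum w m x
  else - x + 2 * zsum (fun y => 1 - w y) m x.

Definition const_left_of (w : Z -> Z) (m : Z) : Prop := forall y, y <= m -> w y = w m.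

(** h{w}: the height function of a 0/1 configuration eventually constant
    near -oo: h(x) - h(x-1) = 1 - 2 w(x), h(x) = x (resp. -x) for all small x
    if w = 0 (resp. 1) near -oo. *)
Definition height (w : Z -> Z) : Z -> Z :=
  height_from w (epsilon (inhabits 0) (const_left_of w)).

(* Main.v *)
Require Import Defs.
From Stdlib Require Import ZArith Reals.
From Stdlib Require Import List Lia Lra ClassicalEpsilon Classical.
Open Scope Z_scope.

Lemma fold_add_acc (l : list Z) a : fold_right Z.add a l = fold_right Z.add 0 l + a.
Proof. induction l; simpl; lia. Qed.

Lemma zsum_succ f m x : m <= x -> zsum f m (x+1) = zsum f m x + f (x+1).
Proof.
  intros H. unfold zsum.
  replace (Z.to_nat (x + 1 - m)) with (S (Z.to_nat (x - m))) by lia.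
  rewrite seq_S, map_app, fold_right_app. simpl.
  rewrite fold_add_acc. rewrite Z.add_0_r. do 2 f_equal. lia.
Qed.

Lemma zsum_nonpos f m x : x <= m -> zsum f m x = 0.
Proof. intros H. unfold zsum. replace (Z.to_nat (x - m)) with 0%nat by lia. reflexivity. Qed.

Lemma zsum_ext f g m x : (forall z, m < z <= x -> f z = g z) -> zsum f m x = zsum g m x.
Proof.
  intros H. unfold zsum. f_equal. apply map_ext_in. intros a Ha.
  apply in_seq in Ha. apply H. lia.
Qed.

Lemma zsum_zero m x : zsum (fun _ => 0) m x = 0.
Proof. unfold zsum. induction (seq 0 (Z.to_nat (x - m))); simpl; lia. Qed.

Lemma hf_succ w m x : m <= x -> height_from w m (x+1) = height_from w m x + 1 - 2 * w (x+1).
Proof.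
  intros H. unfold height_from. destruct (w m =? 0); rewrite zsum_succ by lia; lia.
Qed.

Lemma hf_left w m x : x <= m -> height_from w m x = if w m =? 0 then x else -x.
Proof.
  intros H. unfold height_from. rewrite !zsum_nonpos by lia. destruct (w m =? 0); lia.
Qed.

Lemma hf_ext w w' m x : w m = w' m -> (forall z, m < z <= x -> w z = w' z) ->
  height_from w m x = height_from w' m x.
Proof.
  intros H0 H. unfold height_from. rewrite H0.
  rewrite (zsum_ext w w' m x H).
  rewrite (zsum_ext (fun y => 1 - w y) (fun y => 1 - w' y) m x) by (intros; rewrite H; lia).
  reflexivity.
Qed.

Lemma hf_char w m (g : Z -> Z) :
  (forall x, m <= x -> g (x+1) = g x + 1 - 2 * w (x+1)) ->
  g m = height_from w m m -> forall x, m <= x -> height_from w m x = g x.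
Proof.
  intros Hr H0 x Hx.
  replace x with (m + Z.of_nat (Z.to_nat (x - m))) by lia.
  induction (Z.to_nat (x - m)) as [|n IH].
  - rewrite Z.add_0_r. auto.
  - rewrite Nat2Z.inj_succ. replace (m + Z.succ (Z.of_nat n)) with (m + Z.of_nat n + 1) by lia.
    rewrite hf_succ by lia. rewrite Hr by lia. lia.
Qed.

Lemma hf_two_le w m L : m <= L -> const_left_of w L -> (w L = 0 \/ w L = 1) ->
  forall x, height_from w m x = height_from w L x.
Proof.
  intros HmL HL H01.
  assert (Hm : w m = w L) by (apply HL; lia).
  assert (Hleft : forall x, x <= L -> height_from w m x = height_from w L x).
  { intros x Hx. rewrite (hf_left w L x Hx). unfold height_from. rewrite Hm.
    destruct H01 as [E|E]; rewrite E; cbv [Z.eqb Pos.eqb].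
    - rewrite (zsum_ext w (fun _ => 0) m x), zsum_zero. lia.
      intros z Hz. rewrite (HL z) by lia. auto.
    - rewrite (zsum_ext (fun y => 1 - w y) (fun _ => 0) m x), zsum_zero. lia.
      intros z Hz. rewrite (HL z) by lia. lia. }
  intros x. destruct (Z.le_gt_cases x L) as [Hx|Hx]; [auto|].
  symmetry. apply hf_char; [| rewrite Hleft by lia; reflexivity | lia].
  intros y Hy. apply hf_succ. lia.
Qed.

Lemma height_eq w L : const_left_of w L -> (w L = 0 \/ w L = 1) ->
  forall x, height w x = height_from w L x.
Proof.
  intros HL H01 x. unfold height.
  assert (Hex : exists m, const_left_of w m) by (exists L; auto).
  pose proof (epsilon_spec (inhabits 0) _ Hex) as Hm.
  set (m := epsilon (inhabits 0) (const_left_of w)) in *.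
  destruct (Z.le_gt_cases m L).
  - apply hf_two_le; auto.
  - assert (E : w L = w m) by (apply Hm; lia).
    symmetry. apply hf_two_le; [lia|auto|rewrite <- E; auto].
Qed.

Definition swapf (f : Z -> Z) y : Z -> Z :=
  fun z => if z =? y then f (y+1) else if z =? y+1 then f y else f z.
Definition stepf (r : bool) (f : Z -> Z) y : Z -> Z :=
  if (if r then f y <? f (y+1) else f (y+1) <? f y) then swapf f y else f.
Definition Rel (D : Z -> Prop) a b r y (f g : Z -> Z) : Prop :=
  ((D y /\ D (y+1)) -> forall z, a <= z <= b -> D z -> g z = stepf r f y z) /\
  (~(D y /\ D (y+1)) -> forall z, a <= z <= b -> D z -> g z = f z).
Definition agree (D : Z -> Prop) a b (f g : Z -> Z) := forall z, a <= z <= b -> D z -> f z = g z.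
Definition bdry_ok P1 Pq (D : Z -> Prop) a b T := forall e s, (e = a-1 \/ e = b) -> D e -> D (e+1) ->
  (s <= T)%R -> ~ rings P1 Pq e s.

Definition maxle (l : list R) (t : R) : R :=
  fold_right (fun r acc => if Rlt_dec 0 r then if Rle_dec r t then Rmax r acc else acc else acc) 0%R l.
Definition maxlt (l : list R) (s : R) : R :=
  fold_right (fun r acc => if Rlt_dec r s then Rmax r acc else acc) 0%R l.
Definition inoc (t r : R) : bool := if Rlt_dec 0 r then if Rle_dec r t then true else false else false.
Definition cnt l t := length (filter (inoc t) l).

Lemma maxle_spec l t : (0 <= t)%R ->
  (0 <= maxle l t <= t)%R /\ (forall r, In r l -> (0 < r <= t)%R -> (r <= maxle l t)%R) /\
  (maxle l t = 0%R \/ (In (maxle l t) l /\ (0 < maxle l t <= t)%R)).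
Proof.
  intros Ht. induction l as [|r l IH]; simpl.
  - split; [lra|]. split; [tauto|auto].
  - destruct IH as [H1 [H2 H3]].
    destruct (Rlt_dec 0 r); [destruct (Rle_dec r t)|].
    + unfold Rmax. destruct (Rle_dec r (maxle l t)).
      * split; [lra|]. split.
        { intros r' [E|E] Hr'; [subst; lra| auto]. }
        destruct H3 as [H3|H3]; [left; auto| right; tauto].
      * split; [lra|]. split.
        { intros r' [E|E] Hr'; [subst; lra| specialize (H2 r' E Hr'); lra]. }
        right. split; [left; auto| lra].
    + split; [lra|]. split.
      { intros r' [E|E] Hr'; [subst; lra| auto]. }
      destruct H3 as [H3|H3]; [left; auto| right; split; [right|]; tauto].
    + split; [lra|]. split.
      { intros r' [E|E] Hr'; [subst; lra| auto]. }
      destruct H3 as [H3|H3]; [left; auto| right; split; [right|]; tauto].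
Qed.

Lemma maxlt_spec l s : (0 < s)%R ->
  (0 <= maxlt l s < s)%R /\ (forall r, In r l -> (r < s)%R -> (r <= maxlt l s)%R).
Proof.
  intros Hs. induction l as [|r l IH]; simpl.
  - split; [lra|tauto].
  - destruct IH as [H1 H2]. destruct (Rlt_dec r s).
    + unfold Rmax. destruct (Rle_dec r (maxlt l s)).
      * split; [lra|]. intros r' [E|E] Hr'; [subst; lra| auto].
      * split; [lra|]. intros r' [E|E] Hr'; [subst; lra| specialize (H2 r' E Hr'); lra].
    + split; [lra|]. intros r' [E|E] Hr'; [subst; lra| auto].
Qed.

Lemma filter_le {A} (p q : A -> bool) l : (forall x, p x = true -> q x = true) ->
  (length (filter p l) <= length (filter q l))%nat.
Proof.
  intros H. induction l as [|x l IH]; simpl; [lia|].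
  destruct (p x) eqn:E1; [rewrite (H x E1); simpl; lia|].
  destruct (q x); simpl; lia.
Qed.

Lemma filter_lt {A} (p q : A -> bool) l x0 : (forall x, p x = true -> q x = true) ->
  In x0 l -> q x0 = true -> p x0 = false -> (length (filter p l) < length (filter q l))%nat.
Proof.
  intros H. induction l as [|x l IH]; simpl; [tauto|].
  intros [E|E] Hq Hp.
  - subst. rewrite Hp, Hq. simpl. pose proof (filter_le p q l H). lia.
  - specialize (IH E Hq Hp).
    destruct (p x) eqn:E1; [rewrite (H x E1); simpl; lia|].
    destruct (q x); simpl; lia.
Qed.

Lemma ring_list P1 Pq : good_clocks P1 Pq -> forall a b (T : R), exists l,
  forall y s, a <= y < b -> (s <= T)%R -> rings P1 Pq y s -> In s l.
Proof.
  intros G a b T.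
  destruct G as [_ [Gfin _]].
  assert (forall n, exists l, forall y s, a <= y < a + Z.of_nat n -> (s <= T)%R -> rings P1 Pq y s -> In s l).
  { induction n as [|n [l IH]].
    - exists nil. intros; lia.
    - destruct (Gfin (a + Z.of_nat n) T) as [l' Hl'].
      exists (l ++ l'). intros y s Hy Hs Hr. apply in_or_app.
      destruct (Z.eq_dec y (a + Z.of_nat n)).
      + subst. right. auto.
      + left. apply (IH y); auto. lia. }
  destruct (H (Z.to_nat (b - a))) as [l Hl]. exists l. intros y s Hy. apply Hl. lia.
Qed.

Lemma sq_window P1 Pq D a b T z (I : R -> Prop) :
  bdry_ok P1 Pq D a b T -> a <= z <= b -> (forall s, I s -> (s <= T)%R) ->
  (forall e s, a <= e < b -> (e = z-1 \/ e = z) -> D e -> D (e+1) -> I s -> ~ rings P1 Pq e s) ->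
  site_quiet P1 Pq D z I.
Proof.
  intros Hb Hz HI Hin e s Hs He De De1.
  destruct (Z_lt_le_dec e b); destruct (Z_le_gt_dec a e).
  - apply (Hin e s); auto; lia.
  - apply (Hb e s); auto; lia.
  - apply (Hb e s); auto; lia.
  - lia.
Qed.

Lemma quiet_agree P1 Pq D s0 sigma a b T u v :
  trajectory P1 Pq D s0 sigma -> bdry_ok P1 Pq D a b T -> (0 <= u)%R -> (u <= v)%R -> (v <= T)%R ->
  (forall y s, a <= y < b -> (u < s <= v)%R -> ~ rings P1 Pq y s) ->
  agree D a b (sigma u) (sigma v).
Proof.
  intros Tr Hb Hu Huv HvT Hq z Hz Dz.
  destruct Tr as [_ [Tr2 _]]. symmetry. apply Tr2; auto.
  apply (sq_window P1 Pq D a b T); auto.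
  intros; lra.
Qed.

Lemma step_rel P1 Pq (D : Z -> Prop) (s0 : Z -> Z) (sigma : R -> Z -> Z) a b (T u s : R) y (r : bool) :
  good_clocks P1 Pq -> trajectory P1 Pq D s0 sigma -> bdry_ok P1 Pq D a b T ->
  a <= y < b -> (if r then P1 y s else Pq y s : Prop) ->
  (0 <= u)%R -> (u < s)%R -> (s <= T)%R ->
  (forall y' s', a <= y' < b -> (u < s' < s)%R -> ~ rings P1 Pq y' s') ->
  Rel D a b r y (sigma u) (sigma s).
Proof.
  intros G Tr Hb Hy Hr Hu Hus HsT Hq.
  assert (Hring : rings P1 Pq y s) by (unfold rings; destruct r; tauto).
  destruct G as [_ [_ [Gdist _]]].
  destruct Tr as [_ [Tr2 [Tr3 Tr4]]].
  assert (Hother : forall z, a <= z <= b -> D z -> z <> y -> z <> y + 1 -> sigma s z = sigma u z).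
  { intros z Hz Dz N1 N2. apply Tr2; auto; [lra|].
    apply (sq_window P1 Pq D a b T); auto; [intros; lra|].
    intros e s' He Hez _ _ Hs' Hr'.
    destruct (Rlt_dec s' s).
    - apply (Hq e s'); auto; lra.
    - assert (s' = s) by lra. subst s'. pose proof (Gdist e y s Hr' Hring). lia. }
  split.
  - intros [Dy Dy1] z Hz Dz.
    assert (Qy : site_quiet P1 Pq D y (fun r0 => (u < r0 < s)%R)).
    { apply (sq_window P1 Pq D a b T); auto; try lia; try (intros; lra); intros e s' He _ _ _ Hs'; apply Hq; auto. }
    assert (Qy1 : site_quiet P1 Pq D (y+1) (fun r0 => (u < r0 < s)%R)).
    { apply (sq_window P1 Pq D a b T); auto; try lia; try (intros; lra); intros e s' He _ _ _ Hs'; apply Hq; auto. }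
    assert (Hus' : (0 <= u < s)%R) by lra.
    unfold stepf, swapf.
    destruct r.
    + specialize (Tr3 y s u Hr Dy Dy1 Hus' Qy Qy1).
      destruct (sigma u y <? sigma u (y + 1)).
      * destruct (Z.eqb_spec z y); [subst; tauto|].
        destruct (Z.eqb_spec z (y+1)); [subst; tauto|]. apply Hother; auto.
      * destruct (Z.eq_dec z y); [subst; tauto|].
        destruct (Z.eq_dec z (y+1)); [subst; tauto|]. apply Hother; auto.
    + specialize (Tr4 y s u Hr Dy Dy1 Hus' Qy Qy1).
      destruct (sigma u (y + 1) <? sigma u y).
      * destruct (Z.eqb_spec z y); [subst; tauto|].
        destruct (Z.eqb_spec z (y+1)); [subst; tauto|]. apply Hother; auto.
      * destruct (Z.eq_dec z y); [subst; tauto|].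
        destruct (Z.eq_dec z (y+1)); [subst; tauto|]. apply Hother; auto.
  - intros ND z Hz Dz. apply Tr2; auto; [lra|].
    apply (sq_window P1 Pq D a b T); auto; [intros; lra|].
    intros e s' He Hez De De1 Hs' Hr'.
    destruct (Rlt_dec s' s).
    + apply (Hq e s'); auto; lra.
    + assert (s' = s) by lra. subst s'. pose proof (Gdist e y s Hr' Hring). subst. tauto.
Qed.

Lemma event_ind P1 Pq (D1 D2 : Z -> Prop) s01 s02 (s1 s2 : R -> Z -> Z) a b (T : R)
  (Inv : (Z -> Z) -> (Z -> Z) -> Prop) :
  good_clocks P1 Pq -> trajectory P1 Pq D1 s01 s1 -> trajectory P1 Pq D2 s02 s2 ->
  bdry_ok P1 Pq D1 a b T -> bdry_ok P1 Pq D2 a b T ->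
  (forall f1 f2 g1 g2, agree D1 a b f1 g1 -> agree D2 a b f2 g2 -> Inv f1 f2 -> Inv g1 g2) ->
  (forall r y f1 f2 g1 g2, a <= y < b -> Rel D1 a b r y f1 g1 -> Rel D2 a b r y f2 g2 ->
     Inv f1 f2 -> Inv g1 g2) ->
  Inv (s1 0%R) (s2 0%R) ->
  forall t, (0 <= t <= T)%R -> Inv (s1 t) (s2 t).
Proof.
  intros G Tr1 Tr2 Hb1 Hb2 Hext Hstep H0.
  destruct (ring_list P1 Pq G a b T) as [l Hl].
  assert (forall n t, (0 <= t <= T)%R -> (cnt l t < n)%nat -> Inv (s1 t) (s2 t)).
  { induction n as [|n IH]; intros t Ht Hc; [lia|].
    destruct (maxle_spec l t) as [M1 [M2 M3]]; [lra|].
    set (s := maxle l t) in *.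
    assert (Hq : forall y r, a <= y < b -> (s < r <= t)%R -> ~ rings P1 Pq y r).
    { intros y r Hy Hr Hring. assert (In r l) by (apply (Hl y); auto; lra).
      specialize (M2 r H ltac:(lra)). lra. }
    assert (A1 : agree D1 a b (s1 s) (s1 t)) by (apply (quiet_agree P1 Pq D1 s01 s1 a b T); auto; lra).
    assert (A2 : agree D2 a b (s2 s) (s2 t)) by (apply (quiet_agree P1 Pq D2 s02 s2 a b T); auto; lra).
    apply (Hext _ _ _ _ A1 A2).
    destruct M3 as [E|[Ins Hs]].
    { rewrite E. auto. }
    destruct (maxlt_spec l s) as [U1 U2]; [lra|].
    set (u := maxlt l s) in *.
    assert (Hcu : (cnt l u < cnt l t)%nat).
    { unfold cnt. apply (filter_lt _ _ l s); auto.
      - intros x. unfold inoc. destruct (Rlt_dec 0 x); [|discriminate].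
        destruct (Rle_dec x u); [|discriminate]. destruct (Rle_dec x t); auto. lra.
      - unfold inoc. destruct (Rlt_dec 0 s); [|lra]. destruct (Rle_dec s t); auto; lra.
      - unfold inoc. destruct (Rlt_dec 0 s); [|lra]. destruct (Rle_dec s u); auto; lra. }
    assert (IHu : Inv (s1 u) (s2 u)) by (apply IH; [lra|lia]).
    assert (Hq' : forall y r, a <= y < b -> (u < r < s)%R -> ~ rings P1 Pq y r).
    { intros y r Hy Hr Hring. assert (In r l) by (apply (Hl y); auto; lra).
      specialize (U2 r H ltac:(lra)). lra. }
    destruct (classic (exists y, a <= y < b /\ rings P1 Pq y s)) as [[y [Hy Hr]]|NR].
    - assert (Hrb : exists rb : bool, if rb then P1 y s else Pq y s).
      { destruct Hr; [exists true|exists false]; auto. }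
      destruct Hrb as [rb Hrb].
      apply (Hstep rb y (s1 u) (s2 u)); auto.
      + apply (step_rel P1 Pq D1 s01 s1 a b T); auto; lra.
      + apply (step_rel P1 Pq D2 s02 s2 a b T); auto; lra.
    - assert (Hq2 : forall y r, a <= y < b -> (u < r <= s)%R -> ~ rings P1 Pq y r).
      { intros y r Hy Hr Hring. destruct (Rlt_dec r s).
        - apply (Hq' y r); auto; lra.
        - assert (r = s) by lra. subst r. apply NR. exists y. auto. }
      apply (Hext (s1 u) (s2 u)); auto.
      + apply (quiet_agree P1 Pq D1 s01 s1 a b T); auto; lra.
      + apply (quiet_agree P1 Pq D2 s02 s2 a b T); auto; lra. }
  intros t Ht. apply (H (S (cnt l t))); auto.
Qed.

Ltac zd := repeat match goal with
 | |- context [?a <? ?b] => destruct (Z.ltb_spec a b)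
 | |- context [?a <=? ?b] => destruct (Z.leb_spec a b)
 | |- context [?a =? ?b] => destruct (Z.eqb_spec a b)
 end.

Lemma hf_rec w m x : m < x -> height_from w m x = height_from w m (x-1) + 1 - 2 * w x.
Proof. intros H. replace x with (x - 1 + 1) at 1 by lia. rewrite hf_succ by lia.
  replace (x - 1 + 1) with x by lia. lia. Qed.

Lemma hf_nat_ind (P : Z -> Prop) m : P m -> (forall x, m <= x -> P x -> P (x+1)) -> forall x, m <= x -> P x.
Proof.
  intros H0 HS x Hx. replace x with (m + Z.of_nat (Z.to_nat (x - m))) by lia.
  induction (Z.to_nat (x - m)) as [|n IH]; [rewrite Z.add_0_r; auto|].
  replace (m + Z.of_nat (S n)) with (m + Z.of_nat n + 1) by lia. apply HS; auto. lia.
Qed.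

Lemma hstep w w' L R y : L < y -> y < R ->
  (forall z, L <= z <= R -> z <> y -> z <> y+1 -> w' z = w z) ->
  w' y + w' (y+1) = w y + w (y+1) ->
  forall x, L <= x <= R -> x <> y -> height_from w' L x = height_from w L x.
Proof.
  intros H1 H2 Hag Hs.
  assert (Hlow : forall x, L <= x < y -> height_from w' L x = height_from w L x).
  { intros x Hx. apply hf_ext; [apply Hag; lia|]. intros z Hz. apply Hag; lia. }
  assert (Hhi : forall x, y + 1 <= x -> x <= R -> height_from w' L x = height_from w L x).
  { apply (hf_nat_ind (fun x => x <= R -> height_from w' L x = height_from w L x)).
    - intros _. rewrite !(hf_rec _ L (y+1)) by lia. replace (y+1-1) with y by lia.
      rewrite !(hf_rec _ L y) by lia. rewrite Hlow by lia. lia.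
    - intros x Hx IH Hr. rewrite !hf_succ by lia. rewrite IH by lia. rewrite Hag by lia. lia. }
  intros x Hx Hne. destruct (Z_lt_le_dec x y); [apply Hlow; lia| apply Hhi; lia].
Qed.

Lemma hf_ones w m m' x : m <= m' <= x -> (forall z, m' < z <= x -> w z = 1) ->
  height_from w m x = height_from w m m' - (x - m').
Proof.
  intros H Hw. revert Hw.
  apply (hf_nat_ind (fun x => (forall z, m' < z <= x -> w z = 1) -> height_from w m x = height_from w m m' - (x - m')) m'); [intros; lia| |lia].
  intros y Hy IH Hw. rewrite hf_succ by lia. rewrite IH by (intros; apply Hw; lia). rewrite Hw by lia. lia.
Qed.

Lemma hf_lip w m m' x : m <= m' <= x -> (forall z, m' < z <= x -> 0 <= w z <= 1) ->
  height_from w m m' - (x - m') <= height_from w m x <= height_from w m m' + (x - m').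
Proof.
  intros H Hw. revert Hw.
  apply (hf_nat_ind (fun x => (forall z, m' < z <= x -> 0 <= w z <= 1) -> height_from w m m' - (x - m') <= height_from w m x <= height_from w m m' + (x - m')) m'); [intros; lia| |lia].
  intros y Hy IH Hw. rewrite hf_succ by lia. specialize (IH ltac:(intros; apply Hw; lia)).
  specialize (Hw (y+1) ltac:(lia)). lia.
Qed.

Definition wx N k (f : Z -> Z) := ext N (occ k f).
Definition wz L k (f : Z -> Z) := fun y => if y <=? L then 1 else occ k f y.
Definition upd1 (r : bool) a b := if r then Z.min a b else Z.max a b.
Definition upd2 (r : bool) a b := if r then Z.max a b else Z.min a b.

Lemma wx01 N k f z : wx N k f z = 0 \/ wx N k f z = 1.
Proof. unfold wx, ext, occ. zd; lia. Qed.
Lemma wz01 L k f z : wz L k f z = 0 \/ wz L k f z = 1.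
Proof. unfold wz, occ. zd; lia. Qed.
Lemma occ01 k f z : occ k f z = 0 \/ occ k f z = 1.
Proof. unfold occ. zd; lia. Qed.

Lemma stepf_other r f y z : z <> y -> z <> y + 1 -> stepf r f y z = f z.
Proof. intros. unfold stepf, swapf. destruct r; [destruct (f y <? f (y+1))|destruct (f (y+1) <? f y)]; auto; zd; lia. Qed.

Lemma occ_stepf k r f y :
  occ k (stepf r f y) y = upd1 r (occ k f y) (occ k f (y+1)) /\
  occ k (stepf r f y) (y+1) = upd2 r (occ k f y) (occ k f (y+1)).
Proof.
  unfold occ, stepf, swapf, upd1, upd2. destruct r;
  [destruct (Z.ltb_spec (f y) (f (y+1)))|destruct (Z.ltb_spec (f (y+1)) (f y))]; cbv beta;
  rewrite ?Z.eqb_refl; try (replace (y + 1 =? y) with false by (symmetry; apply Z.eqb_neq; lia));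
  rewrite ?Z.eqb_refl; zd; lia.
Qed.

Lemma rel_N N k a b r y f g : a <= 1 -> Z.of_nat N <= b -> a <= y < b ->
  Rel (dom_N N) a b r y f g ->
  (forall z, z <> y -> z <> y+1 -> wx N k g z = wx N k f z) /\
  ((1 <= y /\ y + 1 <= Z.of_nat N) -> wx N k g y = upd1 r (wx N k f y) (wx N k f (y+1)) /\
                          wx N k g (y+1) = upd2 r (wx N k f y) (wx N k f (y+1))) /\
  (~(1 <= y /\ y + 1 <= Z.of_nat N) -> forall z, wx N k g z = wx N k f z).
Proof.
  intros Ha Hb Hy [R1 R2].
  assert (Hoth : forall z, 1 <= z <= Z.of_nat N -> z <> y -> z <> y+1 -> g z = f z).
  { intros z Hz N1 N2. destruct (Z_le_dec 1 y); destruct (Z_le_dec (y+1) (Z.of_nat N)).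
    - rewrite (R1 ltac:(unfold dom_N; lia) z ltac:(lia) ltac:(unfold dom_N; lia)). apply stepf_other; auto.
    - apply R2; unfold dom_N; lia.
    - apply R2; unfold dom_N; lia.
    - apply R2; unfold dom_N; lia. }
  split; [|split].
  - intros z N1 N2. unfold wx, ext. zd; auto. unfold occ. rewrite Hoth by lia. reflexivity.
  - intros Hd. pose proof (occ_stepf k r f y) as [O1 O2].
    assert (E1 : g y = stepf r f y y) by (apply R1; unfold dom_N; lia).
    assert (E2 : g (y+1) = stepf r f y (y+1)) by (apply R1; unfold dom_N; lia).
    unfold wx, ext. zd; try lia. unfold occ in *. rewrite E1, E2. auto.
  - intros Hd z. unfold wx, ext. zd; auto. unfold occ. rewrite R2 by (unfold dom_N; lia). reflexivity.
Qed.

Lemma rel_Z L R k r y f g : L + 1 <= y < R ->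
  Rel dom_Z (L+1) R r y f g ->
  (forall z, z <= R -> z <> y -> z <> y+1 -> wz L k g z = wz L k f z) /\
  wz L k g y = upd1 r (wz L k f y) (wz L k f (y+1)) /\
  wz L k g (y+1) = upd2 r (wz L k f y) (wz L k f (y+1)).
Proof.
  intros Hy [R1 _]. assert (Hd : dom_Z y /\ dom_Z (y+1)) by (split; exact I).
  pose proof (occ_stepf k r f y) as [O1 O2].
  split; [|split].
  - intros z Hz N1 N2. unfold wz. zd; auto. unfold occ.
    rewrite (R1 Hd z ltac:(lia) I). rewrite stepf_other; auto.
  - unfold wz. zd; try lia. unfold occ in *. rewrite (R1 Hd y ltac:(lia) I). auto.
  - unfold wz. zd; try lia. unfold occ in *. rewrite (R1 Hd (y+1) ltac:(lia) I). auto.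
Qed.

Lemma upd_sum r a b : (a = 0 \/ a = 1) -> (b = 0 \/ b = 1) -> upd1 r a b + upd2 r a b = a + b.
Proof. unfold upd1, upd2; destruct r; lia. Qed.

Lemma arith_cmp r A1 A2 a1 b1 a2 b2 :
  (a1 = 0 \/ a1 = 1) -> (b1 = 0 \/ b1 = 1) -> (a2 = 0 \/ a2 = 1) -> (b2 = 0 \/ b2 = 1) ->
  A1 <= A2 -> A1 + 2 - 2*a1 - 2*b1 <= A2 + 2 - 2*a2 - 2*b2 ->
  A1 + 1 - 2 * upd1 r a1 b1 <= A2 + 1 - 2 * upd1 r a2 b2.
Proof. unfold upd1; destruct r; lia. Qed.

Lemma arith_G r y k A a b :
  (a = 0 \/ a = 1) -> (b = 0 \/ b = 1) ->
  -(y-1) <= A -> y - 1 - 2*k <= A ->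
  -(y+1) <= A + 2 - 2*a - 2*b -> y + 1 - 2*k <= A + 2 - 2*a - 2*b ->
  -y <= A + 1 - 2 * upd1 r a b /\ y - 2*k <= A + 1 - 2 * upd1 r a b.
Proof. unfold upd1; destruct r; lia. Qed.

Lemma sum_ind (p : Z -> bool) l :
  fold_right Z.add 0 (map (fun y => if p y then 1 else 0) l) = Z.of_nat (length (filter p l)).
Proof. induction l as [|a l IH]; [reflexivity|]. cbn [map filter fold_right]. destruct (p a); cbn [length]; rewrite ?Nat2Z.inj_succ; lia. Qed.

Lemma perm_count N lam0 k : is_perm_N N lam0 -> 0 <= k ->
  forall x, 0 <= x <= Z.of_nat N -> zsum (wx N k lam0) 0 x <= k.
Proof.
  intros [Hdom Hinj] Hk x Hx.
  set (l := map (fun i => 1 + Z.of_nat i) (seq 0 (Z.to_nat x))).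
  set (p := fun y => lam0 y <=? k).
  assert (E : zsum (wx N k lam0) 0 x = fold_right Z.add 0 (map (fun y => if p y then 1 else 0) l)).
  { unfold zsum, l. rewrite map_map. f_equal. replace (x - 0) with x by lia.
    apply map_ext_in. intros i Hi. apply in_seq in Hi.
    unfold wx, ext, occ, p. replace (0 + 1 + Z.of_nat i) with (1 + Z.of_nat i) by lia. zd; lia. }
  rewrite E, sum_ind.
  assert (Hl : forall y, In y l -> 1 <= y <= x).
  { intros y Hy. unfold l in Hy. apply in_map_iff in Hy. destruct Hy as [i [Ei Hi]].
    apply in_seq in Hi. lia. }
  assert (ND : NoDup (map lam0 (filter p l))).
  { apply NoDup_map_NoDup_ForallPairs.
    - intros u v Hu Hv Euv. apply filter_In in Hu. apply filter_In in Hv.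
      destruct Hu as [Hu _]; destruct Hv as [Hv _]. apply Hl in Hu; apply Hl in Hv. apply Hinj; auto; unfold dom_N; lia.
    - apply NoDup_filter. unfold l. apply NoDup_map_NoDup_ForallPairs; [|apply seq_NoDup].
      intros u v _ _ Euv. lia. }
  assert (Inc : incl (map lam0 (filter p l)) (map (fun i => 1 + Z.of_nat i) (seq 0 (Z.to_nat k)))).
  { intros v Hv. apply in_map_iff in Hv. destruct Hv as [y [Ey Hy]]. subst v.
    apply filter_In in Hy. destruct Hy as [Hy Hp]. apply Hl in Hy.
    assert (Hd : dom_N N (lam0 y)) by (apply Hdom; unfold dom_N; lia).
    unfold p in Hp. apply Z.leb_le in Hp. unfold dom_N in Hd.
    apply in_map_iff. exists (Z.to_nat (lam0 y - 1)). split; [lia|]. apply in_seq. lia. }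
  pose proof (NoDup_incl_length ND Inc) as HL.
  rewrite !length_map, length_seq in HL. lia.
Qed.

Lemma hf_br0 w m x : w m = 0 -> height_from w m x = x - 2 * zsum w m x.
Proof. intros H. unfold height_from. rewrite H. reflexivity. Qed.

Definition InvP N k (f1 f2 : Z -> Z) :=
  forall x, 0 <= x <= Z.of_nat N -> height_from (wx N k f1) 0 x <= height_from (wx N k f2) 0 x.

Lemma wx_agree N k a b f g : a <= 1 -> Z.of_nat N <= b -> agree (dom_N N) a b f g ->
  forall z, wx N k f z = wx N k g z.
Proof. intros Ha Hb H z. unfold wx, ext, occ. destruct (Z.ltb_spec z 1); auto. destruct (Z.ltb_spec (Z.of_nat N) z); auto. rewrite H; unfold dom_N; auto; lia. Qed.

Lemma comp_perm N P1 Pq (xi lam : R -> Z -> Z) lam0 k t :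
  good_clocks P1 Pq -> is_perm_N N lam0 ->
  trajectory P1 Pq (dom_N N) (fun x => x) xi ->
  trajectory P1 Pq (dom_N N) lam0 lam ->
  0 <= k <= Z.of_nat N -> (0 <= t)%R ->
  forall x, height (ext N (occ k (xi t))) x <= height (ext N (occ k (lam t))) x.
Proof.
  intros G Hp Tx Tl Hk Ht.
  assert (Hb : bdry_ok P1 Pq (dom_N N) 1 (Z.of_nat N) t).
  { intros e s He De De1. unfold dom_N in *. lia. }
  assert (HI : InvP N k (xi t) (lam t)).
  { apply (event_ind P1 Pq (dom_N N) (dom_N N) (fun x => x) lam0 xi lam 1 (Z.of_nat N) t); auto; [| | |lra].
    - intros f1 f2 g1 g2 A1 A2 H x Hx.
      rewrite (hf_ext (wx N k g1) (wx N k f1)), (hf_ext (wx N k g2) (wx N k f2));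
        try (intros; symmetry; eapply wx_agree; eauto; lia); try (symmetry; eapply wx_agree; eauto; lia).
      auto.
    - intros r y f1 f2 g1 g2 Hy R1 R2 H x Hx.
      destruct (rel_N N k 1 (Z.of_nat N) r y f1 g1 ltac:(lia) ltac:(lia) Hy R1) as [X1 [X2 _]].
      destruct (rel_N N k 1 (Z.of_nat N) r y f2 g2 ltac:(lia) ltac:(lia) Hy R2) as [Y1 [Y2 _]].
      specialize (X2 ltac:(lia)). specialize (Y2 ltac:(lia)).
      assert (S1 : forall x, 0 <= x <= Z.of_nat N -> x <> y -> height_from (wx N k g1) 0 x = height_from (wx N k f1) 0 x).
      { apply (hstep _ _ 0 (Z.of_nat N) y); try lia; [intros; apply X1; auto|].
        destruct X2 as [-> ->]. apply upd_sum; apply wx01. }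
      assert (S2 : forall x, 0 <= x <= Z.of_nat N -> x <> y -> height_from (wx N k g2) 0 x = height_from (wx N k f2) 0 x).
      { apply (hstep _ _ 0 (Z.of_nat N) y); try lia; [intros; apply Y1; auto|].
        destruct Y2 as [-> ->]. apply upd_sum; apply wx01. }
      destruct (Z.eq_dec x y); [|rewrite S1, S2 by lia; auto].
      subst x. rewrite !(hf_rec _ 0 y) by lia.
      rewrite S1, S2 by lia. destruct X2 as [-> _]. destruct Y2 as [-> _].
      pose proof (H (y-1) ltac:(lia)) as Hm. pose proof (H (y+1) ltac:(lia)) as Hpp.
      rewrite !(hf_rec _ 0 (y+1)) in Hpp by lia. replace (y+1-1) with y in Hpp by lia.
      rewrite !(hf_rec _ 0 y) in Hpp by lia.
      apply arith_cmp; try apply wx01; lia.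
    -
      destruct Tx as [Tx0 _]. destruct Tl as [Tl0 _].
      intros x Hx.
      assert (Ex : height_from (wx N k (xi 0%R)) 0 x = Z.max (-x) (x - 2*k)).
      { rewrite (hf_char _ 0 (fun x => if x <=? 0 then x else if x <=? k then -x else if x <=? Z.of_nat N then x - 2*k else 2*Z.of_nat N - 2*k - x)); [zd; lia| | |lia].
        - intros y Hy. unfold wx, ext, occ. destruct (Z.ltb_spec (y+1) 1); [zd; lia|].
          destruct (Z.ltb_spec (Z.of_nat N) (y+1)); [zd; lia|]. rewrite Tx0 by (unfold dom_N; lia). zd; lia.
        - rewrite hf_left by lia. unfold wx, ext. zd; lia. }
      rewrite Ex.
      assert (W0 : wx N k (lam 0%R) 0 = 0) by (unfold wx, ext; zd; lia).
      assert (Hz : zsum (wx N k (lam 0%R)) 0 x <= k).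
      { rewrite (zsum_ext _ (wx N k lam0)). apply perm_count; auto; lia.
        intros z Hz. unfold wx, ext, occ. rewrite Tl0 by (unfold dom_N; lia). reflexivity. }
      assert (Hz0 : 0 <= zsum (wx N k (lam 0%R)) 0 x <= x).
      { pose proof (hf_lip (wx N k (lam 0%R)) 0 0 x ltac:(lia) ltac:(intros z _; destruct (wx01 N k (lam 0%R) z); lia)) as HH.
        rewrite !hf_br0 in HH by auto. rewrite (zsum_nonpos (wx N k (lam 0%R)) 0 0) in HH by lia. lia. }
      rewrite hf_br0 by auto. lia. }
  intros x.
  assert (C : forall f, const_left_of (ext N (occ k f)) 0 /\ (ext N (occ k f) 0 = 0 \/ ext N (occ k f) 0 = 1)).
  { intros f. split; [intros y Hy; unfold ext; zd; lia| left; unfold ext; zd; lia]. }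
  destruct (C (xi t)) as [C1 C2]. destruct (C (lam t)) as [C3 C4].
  rewrite (height_eq _ 0 C1 C2), (height_eq _ 0 C3 C4).
  destruct (Z_lt_le_dec x 0).
  - rewrite !hf_left by lia. unfold ext. zd; lia.
  - destruct (Z_le_gt_dec x (Z.of_nat N)).
    + apply HI. lia.
    + rewrite !(hf_ones _ 0 (Z.of_nat N) x) by (try lia; intros; unfold ext; zd; lia).
      specialize (HI (Z.of_nat N) ltac:(lia)). unfold wx in HI. lia.
Qed.

Lemma left_bound P1 Pq (zeta : R -> Z -> Z) t L :
  good_clocks P1 Pq -> trajectory P1 Pq dom_Z (fun x => x) zeta -> (0 <= t)%R ->
  (forall s, (s <= t)%R -> ~ rings P1 Pq L s) ->
  forall y, y <= L -> zeta t y <= L.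
Proof.
  intros G Tz Ht HL y Hy.
  pose proof G as G'. destruct G' as [_ [_ [_ [_ [_ GL]]]]].
  destruct (GL t (y - 1)) as [L' [HL' QL']].
  assert (Hb : bdry_ok P1 Pq dom_Z (L'+1) L t).
  { intros e s He _ _ Hs. destruct He as [He|He]; subst e.
    - replace (L' + 1 - 1) with L' by lia. auto.
    - auto. }
  assert (HI : forall z, L' + 1 <= z <= L -> zeta t z <= L).
  { apply (event_ind P1 Pq dom_Z dom_Z (fun x => x) (fun x => x) zeta zeta (L'+1) L t
      (fun f _ => forall z, L' + 1 <= z <= L -> f z <= L)); auto; [| | |lra].
    - intros f1 f2 g1 g2 A1 _ H z Hz. rewrite <- A1 by (auto; exact I). auto.
    - intros r y0 f1 f2 g1 g2 Hy0 [R1 _] _ H z Hz.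
      rewrite (R1 (conj I I) z Hz I). unfold stepf, swapf.
      destruct r; [destruct (f1 y0 <? f1 (y0+1))|destruct (f1 (y0+1) <? f1 y0)]; cbv beta; zd;
        apply H; lia.
    - intros z Hz. destruct Tz as [T0 _]. rewrite T0 by exact I. lia. }
  apply HI. lia.
Qed.

Definition InvZ N k L R (f1 f2 : Z -> Z) :=
  forall x, L <= x <= R ->
    let hx := height_from (wx N k f1) L x in
    let hz := height_from (wz L k f2) L x in
    hx <= hz /\ -x <= hz /\ x - 2*k <= hz /\ (x <= 0 -> hx <= -x) /\ (Z.of_nat N <= x -> hx <= x - 2*k).

Lemma comp_zeta N P1 Pq (xi zeta : R -> Z -> Z) k t :
  good_clocks P1 Pq ->
  trajectory P1 Pq dom_Z (fun x => x) zeta ->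
  trajectory P1 Pq (dom_N N) (fun x => x) xi ->
  0 <= k <= Z.of_nat N -> (0 <= t)%R ->
  forall x, height (ext N (occ k (xi t))) x <= height (occ k (zeta t)) x.
Proof.
  intros G Tz Tx Hk Ht x.
  pose proof G as G'. destruct G' as [_ [_ [_ [_ [GR GL]]]]].
  destruct (GL t (Z.min x 0)) as [L [HL QL]].
  destruct (GR t (Z.max x (Z.of_nat N) + 1)) as [R [HR QR]].
  assert (Hb : forall D, bdry_ok P1 Pq D (L+1) R t).
  { intros D e s He _ _ Hs. destruct He as [He|He]; subst e.
    - replace (L + 1 - 1) with L by lia. auto.
    - auto. }
  assert (HI : InvZ N k L R (xi t) (zeta t)).
  { apply (event_ind P1 Pq (dom_N N) dom_Z (fun x => x) (fun x => x) xi zeta (L+1) R t); auto; [| | |lra].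
    - intros f1 f2 g1 g2 A1 A2 H y Hy.
      assert (E1 : height_from (wx N k g1) L y = height_from (wx N k f1) L y).
      { apply hf_ext; [|intros]; symmetry; eapply wx_agree; eauto; lia. }
      assert (E2 : height_from (wz L k g2) L y = height_from (wz L k f2) L y).
      { apply hf_ext; [|intros z Hz]; unfold wz; zd; auto; unfold occ; rewrite A2; auto; try lia; exact I. }
      cbv zeta. rewrite E1, E2. apply H. auto.
    - intros r y f1 f2 g1 g2 Hy R1 R2 H x0 Hx0. cbv zeta.
      destruct (rel_N N k (L+1) R r y f1 g1 ltac:(lia) ltac:(lia) Hy R1) as [X1 [X2 X3]].
      destruct (rel_Z L R k r y f2 g2 Hy R2) as [Y1 [Y2 Y3]].
      assert (S2 : forall x, L <= x <= R -> x <> y -> height_from (wz L k g2) L x = height_from (wz L k f2) L x).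
      { apply (hstep _ _ L R y); try lia; [intros; apply Y1; auto; lia|].
        rewrite Y2, Y3. apply upd_sum; apply wz01. }
      assert (Hz : height_from (wz L k g2) L y = height_from (wz L k f2) L (y-1) + 1 - 2 * upd1 r (wz L k f2 y) (wz L k f2 (y+1))).
      { rewrite hf_rec by lia. rewrite S2 by lia. rewrite Y2. lia. }
      pose proof (H (y-1) ltac:(lia)) as Hm. pose proof (H (y+1) ltac:(lia)) as Hpp. pose proof (H y ltac:(lia)) as H0.
      cbv zeta in Hm, Hpp, H0.
      rewrite !(hf_rec _ L (y+1)) in Hpp by lia. replace (y+1-1) with y in Hpp by lia.
      rewrite !(hf_rec _ L y) in Hpp by lia.
      rewrite !(hf_rec _ L y) in H0 by lia.
      pose proof (wz01 L k f2 y). pose proof (wz01 L k f2 (y+1)).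
      pose proof (wx01 N k f1 y). pose proof (wx01 N k f1 (y+1)).
      assert (GG : -y <= height_from (wz L k g2) L y /\ y - 2*k <= height_from (wz L k g2) L y).
      { rewrite Hz. apply arith_G; auto; lia. }
      destruct (Z_le_dec 1 y); [destruct (Z_le_dec (y+1) (Z.of_nat N))|].
      + specialize (X2 ltac:(lia)).
        assert (S1 : forall x, L <= x <= R -> x <> y -> height_from (wx N k g1) L x = height_from (wx N k f1) L x).
        { apply (hstep _ _ L R y); try lia; [intros; apply X1; auto|].
          destruct X2 as [-> ->]. apply upd_sum; apply wx01. }
        destruct (Z.eq_dec x0 y); [|rewrite S1, S2 by lia; apply H; auto].
        subst x0. rewrite Hz. rewrite (hf_rec _ L y) by lia. rewrite S1 by lia. destruct X2 as [-> _].
        split; [apply arith_cmp; auto; lia|]. lia.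
      + assert (S1 : forall x, height_from (wx N k g1) L x = height_from (wx N k f1) L x).
        { intros; apply hf_ext; [|intros]; apply X3; lia. }
        rewrite S1. destruct (Z.eq_dec x0 y); [|rewrite S2 by lia; apply H; auto].
        subst x0. rewrite !(hf_rec _ L y) in * by lia. lia.
      + assert (S1 : forall x, height_from (wx N k g1) L x = height_from (wx N k f1) L x).
        { intros; apply hf_ext; [|intros]; apply X3; lia. }
        rewrite S1. destruct (Z.eq_dec x0 y); [|rewrite S2 by lia; apply H; auto].
        subst x0. rewrite !(hf_rec _ L y) in * by lia. lia.
    - destruct Tx as [Tx0 _]. destruct Tz as [Tz0 _].
      intros x0 Hx0. cbv zeta.
      rewrite (hf_char _ L (fun x => if x <=? 0 then x else if x <=? k then -x else if x <=? Z.of_nat N then x - 2*k else 2*Z.of_nat N - 2*k - x)); [| | |lia].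
      rewrite (hf_char _ L (fun x => if x <=? k then -x else x - 2*k)); [zd; lia| | |lia].
      + intros y Hy. unfold wz, occ. rewrite Tz0 by exact I. zd; lia.
      + rewrite hf_left by lia. unfold wz. zd; lia.
      + intros y Hy. unfold wx, ext, occ. destruct (Z.ltb_spec (y+1) 1); [zd; lia|].
        destruct (Z.ltb_spec (Z.of_nat N) (y+1)); [zd; lia|]. rewrite Tx0 by (unfold dom_N; lia). zd; lia.
      + rewrite hf_left by lia. unfold wx, ext. zd; lia. }
  assert (Cx : const_left_of (ext N (occ k (xi t))) L) by (intros y Hy; unfold ext; zd; lia).
  assert (Cz : forall y, y <= L -> occ k (zeta t) y = 1).
  { intros y Hy. unfold occ. pose proof (left_bound P1 Pq zeta t L G Tz Ht QL y Hy). zd; lia. }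
  rewrite (height_eq _ L Cx) by (left; unfold ext; zd; lia).
  rewrite (height_eq (occ k (zeta t)) L) by (try (intros y Hy; rewrite !Cz by lia; auto); right; apply Cz; lia).
  rewrite (hf_ext (occ k (zeta t)) (wz L k (zeta t))).
  - apply HI. lia.
  - rewrite Cz by lia. unfold wz. zd; lia.
  - intros z Hz. unfold wz. zd; [lia|auto].
Qed.

Theorem lemma2p2 (q : R) (N : nat) (P1 Pq : clock)
  (zeta xi lam xibar : R -> Z -> Z) (lam0 xibar0 : Z -> Z) :
  (0 <= q < 1)%R ->
  good_clocks P1 Pq ->
  is_perm_N N lam0 ->
  is_perm_N N xibar0 ->
  trajectory P1 Pq dom_Z (fun x => x) zeta ->
  trajectory P1 Pq (dom_N N) (fun x => x) xi ->
  trajectory P1 Pq (dom_N N) lam0 lam ->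
  trajectory P1 Pq (dom_N N) xibar0 xibar ->
  forall (k : Z) (t : R), 0 <= k <= Z.of_nat N -> (0 <= t)%R ->
  forall x : Z,
    height (ext N (occ k (xi t))) x <= height (ext N (occ k (lam t))) x /\
    height (ext N (occ k (xi t))) x <= height (occ k (zeta t)) x /\
    height (ext N (occ k (xi t))) x <= height (ext N (occ k (xibar t))) x.
Proof.
  intros _ G Pl Pb Tz Tx Tl Tb k t Hk Ht x.
  split; [|split].
  - apply (comp_perm N P1 Pq xi lam lam0 k t); auto.
  - apply (comp_zeta N P1 Pq xi zeta k t); auto.
  - apply (comp_perm N P1 Pq xi xibar xibar0 k t); auto.
Qed.
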